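(* Let $1<\theta<e^3$ with $\log\theta$ irrational, and let $a_k,B_k,\lambda_k$ be associated to the simple continued fraction of $2/\log\theta$. For each $n\in\mathcal A_\theta$ there exist positive integers $c,k$ such that $n=cB_{2k-1}$ and $\lambda_{2k}>\frac{6c^2}{\log\theta}$.
   Context: $\log$ is the natural logarithm; $M'_\theta(n)=\left\lfloor 1/(\theta^{1/n}-1)\right\rfloor$ and $\mathcal A_\theta=\{n\in\mathbb N: M'_\theta(n)\neq \lfloor n/\log\theta-1/2\rfloor\}$. For an irrational $\alpha=[a_0;a_1,a_2,\dots]$ (simple continued fraction, $a_0\in\mathbb Z$, $a_k\ge1$ for $k\ge1$), $A_k/B_k=[a_0;a_1,\dots,a_k]$ is the $k$th convergent in lowest terms with $B_k>0$, and $\lambda_k=[0;a_{k-1},a_{k-2},\dots,a_1]+[a_k;a_{k+1},a_{k+2},\dots]$. *)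

(* Defs.v *)
From Stdlib Require Import Reals Lra ZArith List.
Open Scope R_scope.

Definition Rfloor (x : R) : Z := (up x - 1)%Z.

(* complete quotients alpha_k = [a_k; a_{k+1}, ...] of alpha:
   alpha_0 = alpha, alpha_{k+1} = 1 / (alpha_k - floor alpha_k) *)
Fixpoint cf_rem (alpha : R) (k : nat) : R :=
  match k with
  | O => alpha
  | S k' => / (cf_rem alpha k' - IZR (Rfloor (cf_rem alpha k')))
  end.

Definition cf_a (alpha : R) (k : nat) : Z := Rfloor (cf_rem alpha k).

(* (B_{k-1}, B_k) with B_{-1} = 0, B_0 = 1, B_k = a_k B_{k-1} + B_{k-2} *)
Fixpoint cf_Bpair (alpha : R) (k : nat) : Z * Z :=
  match k with
  | O => (0%Z, 1%Z)
  | S k' => let (p, q) := cf_Bpair alpha k' in (q, (cf_a alpha k * q + p)%Z)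
  end.

Definition cf_B (alpha : R) (k : nat) : Z := snd (cf_Bpair alpha k).

(* finite continued fraction [0; b_1, ..., b_m]  (= 0 for the empty list) *)
Definition fin_cf0 (l : list Z) : R :=
  fold_right (fun b acc => / (IZR b + acc)) 0 l.

(* lambda_k = [0; a_{k-1}, ..., a_1] + [a_k; a_{k+1}, ...] *)
Definition cf_lambda (alpha : R) (k : nat) : R :=
  fin_cf0 (map (cf_a alpha) (rev (seq 1 (k - 1)))) + cf_rem alpha k.

Definition Mprime (theta : R) (n : nat) : Z :=
  Rfloor (/ (Rpower theta (/ INR n) - 1)).

Definition in_A (theta : R) (n : nat) : Prop :=
  (1 <= n)%nat /\ Mprime theta n <> Rfloor (INR n / ln theta - / 2).

Definition irrational (x : R) : Prop :=
  forall p q : Z, q <> 0%Z -> x <> IZR p / IZR q.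

(* Main.v *)
Require Import Defs.
From Stdlib Require Import Reals Lra Lia ZArith List.
From Coquelicot Require Coquelicot.
Open Scope R_scope.

Module ExpIneq.
Import Coquelicot.Coquelicot.
Lemma pos_of_deriv (f f' : R -> R) :
  (forall x, derivable_pt_lim f x (f' x)) -> f 0 = 0 ->
  (forall x, 0 < x -> 0 < f' x) -> forall x, 0 < x -> 0 < f x.
Proof.
  intros Hd H0 Hp x Hx.
  set (pr := fun y => exist (fun l => derivable_pt_lim f y l) (f' y) (Hd y) : derivable_pt f y).
  destruct (MVT_cor1 f 0 x pr Hx) as [c [Hc Hc2]].
  replace (derive_pt f c (pr c)) with (f' c) in Hc by reflexivity.
  rewrite H0 in Hc. assert (0 < f' c * (x - 0)) by (apply Rmult_lt_0_compat; [apply Hp; lra | lra]). lra.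
Qed.
Lemma g_pos x : 0 < x -> 0 < exp x * (x-2) + x + 2.
Proof.
  revert x. apply (pos_of_deriv (fun x => exp x * (x-2) + x + 2) (fun x => exp x * (x - 1) + 1)).
  - intro y. apply is_derive_Reals. auto_derive; auto. ring.
  - rewrite exp_0. ring.
  - apply (pos_of_deriv (fun x => exp x * (x - 1) + 1) (fun x => x * exp x)).
    + intro y. apply is_derive_Reals. auto_derive; auto. ring.
    + rewrite exp_0. ring.
    + intros y Hy. apply Rmult_lt_0_compat; auto. apply exp_pos.
Qed.
Lemma h_pos x : 0 < x -> 0 < exp x * (x^2 - 6*x + 12) - (x^2 + 6*x + 12).
Proof.
  revert x. apply (pos_of_deriv (fun x => exp x * (x^2 - 6*x + 12) - (x^2 + 6*x + 12)) (fun x => exp x * (x^2 - 4*x + 6) - 2*x - 6)).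
  - intro y. apply is_derive_Reals. auto_derive; auto. ring.
  - rewrite exp_0. ring.
  - apply (pos_of_deriv (fun x => exp x * (x^2 - 4*x + 6) - 2*x - 6) (fun x => exp x * (x^2 - 2*x + 2) - 2)).
    + intro y. apply is_derive_Reals. auto_derive; auto. ring.
    + rewrite exp_0. ring.
    + apply (pos_of_deriv (fun x => exp x * (x^2 - 2*x + 2) - 2) (fun x => exp x * x^2)).
      * intro y. apply is_derive_Reals. auto_derive; auto. ring.
      * rewrite exp_0. ring.
      * intros y Hy. apply Rmult_lt_0_compat. apply exp_pos. nra.
Qed.
Lemma exp_bounds x : 0 < x ->
  /x - /2 < / (exp x - 1) /\ / (exp x - 1) < /x - /2 + x / 12.
Proof.
  intros Hx. pose proof (g_pos x Hx). pose proof (h_pos x Hx).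
  pose proof (exp_ineq1 x (Rgt_not_eq x 0 Hx)). set (E := exp x) in *.
  assert (HE : 0 < E - 1) by lra.
  split.
  - apply Rminus_lt_0. field_simplify; try lra.
    apply Rdiv_lt_0_compat; nra.
  - apply Rminus_lt_0. field_simplify; try lra.
    apply Rdiv_lt_0_compat; nra.
Qed.

End ExpIneq.
Import ExpIneq.

Lemma Rfloor_spec z : IZR (Rfloor z) <= z < IZR (Rfloor z) + 1.
Proof.
  unfold Rfloor. destruct (archimed z) as [H1 H2]. rewrite minus_IZR. lra.
Qed.
Lemma Rfloor_mono z1 z2 : z1 <= z2 -> (Rfloor z1 <= Rfloor z2)%Z.
Proof.
  intros H. pose proof (Rfloor_spec z1). pose proof (Rfloor_spec z2).
  assert (IZR (Rfloor z1) < IZR (Rfloor z2) + 1) by lra.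
  rewrite <- plus_IZR in H2. apply lt_IZR in H2. lia.
Qed.
Lemma partA theta n : 1 < theta -> in_A theta n ->
  exists m : Z, 0 < IZR (2*m+1) - INR n * (2 / ln theta) < ln theta / (6 * INR n).
Proof.
  intros Ht [Hn HA]. unfold Mprime, Rpower in HA.
  assert (HL : 0 < ln theta) by (rewrite <- ln_1; apply ln_increasing; lra).
  assert (Hn' : 1 <= INR n) by (apply (le_INR 1); lia).
  set (L := ln theta) in *.
  set (x := / INR n * L) in *.
  assert (Hx : 0 < x) by (unfold x; apply Rmult_lt_0_compat; [apply Rinv_0_lt_compat|]; lra).
  assert (Hz : INR n / L - / 2 = / x - /2).
  { unfold x. field. lra. }
  rewrite Hz in HA.
  destruct (exp_bounds x Hx) as [B1 B2].
  set (y := / (exp x - 1)) in *.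
  pose proof (Rfloor_mono _ _ (Rlt_le _ _ B1)).
  assert (Hlt : (Rfloor (/x - /2) + 1 <= Rfloor y)%Z) by lia.
  apply IZR_le in Hlt. rewrite plus_IZR in Hlt.
  pose proof (Rfloor_spec (/x - /2)). pose proof (Rfloor_spec y).
  exists (Rfloor y). rewrite plus_IZR, mult_IZR.
  assert (E1 : INR n * (2 / L) = 2 * (/x)) by (unfold x; field; lra).
  assert (E2 : L / (6 * INR n) = x / 6) by (unfold x; field; lra).
  rewrite E1, E2. lra.
Qed.




Fixpoint cf_Apair (alpha : R) (k : nat) : Z * Z :=
  match k with
  | O => (1%Z, cf_a alpha 0)
  | S k' => let (p, q) := cf_Apair alpha k' in (q, (cf_a alpha k * q + p)%Z)
  end.

Lemma Bstep al k : cf_Bpair al (S k) =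
  (snd (cf_Bpair al k), (cf_a al (S k) * snd (cf_Bpair al k) + fst (cf_Bpair al k))%Z).
Proof. simpl. destruct (cf_Bpair al k); reflexivity. Qed.
Lemma Astep al k : cf_Apair al (S k) =
  (snd (cf_Apair al k), (cf_a al (S k) * snd (cf_Apair al k) + fst (cf_Apair al k))%Z).
Proof. simpl. destruct (cf_Apair al k); reflexivity. Qed.

Lemma rem_S al k : cf_rem al (S k) = / (cf_rem al k - IZR (cf_a al k)).
Proof. reflexivity. Qed.

Lemma rem_irr al : irrational al -> forall k, irrational (cf_rem al k).
Proof.
  intros Hal k. induction k as [|k IH]; [exact Hal|].
  rewrite rem_S. intros p q Hq E.
  set (r := cf_rem al k) in *. set (f := cf_a al k) in *.
  assert (Hrf : r - IZR f <> 0).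
  { intro H0. apply (IH f 1%Z); [lia|]. unfold Rdiv. rewrite Rinv_1. lra. }
  assert (Hp : p <> 0%Z).
  { intro H0; subst p. rewrite Rdiv_0_l in E. apply (Rinv_neq_0_compat _ Hrf). exact E. }
  apply (IH (f*p+q)%Z p Hp).
  assert (IZR q <> 0) by (apply not_0_IZR; auto).
  assert (IZR p <> 0) by (apply not_0_IZR; auto).
  assert (r - IZR f = IZR q / IZR p).
  { rewrite <- (Rinv_inv (r - IZR f)). rewrite E. field. split; auto. }
  rewrite plus_IZR, mult_IZR. field_simplify; auto. 
  replace r with (IZR f + (r - IZR f)) by ring. rewrite H1. field. auto.
Qed.

Lemma frac_bounds al k : irrational al ->
  0 < cf_rem al k - IZR (cf_a al k) < 1.
Proof.
  intros Hal. pose proof (rem_irr al Hal k) as Hi.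
  unfold cf_a. pose proof (Rfloor_spec (cf_rem al k)).
  split; [|lra].
  destruct (Rle_lt_or_eq_dec _ _ (proj1 H)) as [h|h]; [lra|].
  exfalso. apply (Hi (Rfloor (cf_rem al k)) 1%Z); [lia|]. unfold Rdiv. rewrite Rinv_1. lra.
Qed.

Lemma rem_gt1 al k : irrational al -> 1 < cf_rem al (S k).
Proof.
  intros Hal. rewrite rem_S. pose proof (frac_bounds al k Hal).
  rewrite <- Rinv_1. apply Rinv_lt_contravar; lra.
Qed.

Lemma a_ge1 al k : irrational al -> (1 <= cf_a al (S k))%Z.
Proof.
  intros Hal. pose proof (rem_gt1 al k Hal). pose proof (frac_bounds al (S k) Hal).
  assert (0 < IZR (cf_a al (S k))) by lra. apply lt_IZR in H1. lia.
Qed.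

Lemma B_bounds al k : irrational al ->
  (0 <= fst (cf_Bpair al k) /\ 1 <= snd (cf_Bpair al k) /\
   ((1 <= k)%nat -> 1 <= fst (cf_Bpair al k)) /\ Z.of_nat k <= snd (cf_Bpair al k))%Z.
Proof.
  intros Hal. induction k as [|k IH]; [simpl; lia|].
  rewrite Bstep; simpl. pose proof (a_ge1 al k Hal).
  destruct IH as (H1 & H2 & H3 & H4). destruct k; nia.
Qed.

Lemma key_id al k : irrational al ->
  al * (IZR (snd (cf_Bpair al k)) * cf_rem al (S k) + IZR (fst (cf_Bpair al k)))
  = IZR (snd (cf_Apair al k)) * cf_rem al (S k) + IZR (fst (cf_Apair al k)).
Proof.
  intros Hal. induction k as [|k IH].
  - simpl. pose proof (frac_bounds al 0 Hal). simpl in H. change (Rfloor al) with (cf_a al 0). field. lra.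
  - rewrite Bstep, Astep. simpl fst; simpl snd.
    set (R1 := cf_rem al (S k)) in *.
    assert (HR2 : cf_rem al (S (S k)) = / (R1 - IZR (cf_a al (S k)))) by reflexivity.
    pose proof (frac_bounds al (S k) Hal). fold R1 in H.
    set (R2 := cf_rem al (S (S k))) in *.
    assert (E : R1 = IZR (cf_a al (S k)) + / R2).
    { rewrite HR2, Rinv_inv. ring. }
    assert (HR2p : R2 <> 0) by (rewrite HR2; apply Rinv_neq_0_compat; lra).
    rewrite E in IH. rewrite !plus_IZR, !mult_IZR.
    transitivity (R2 * (al * (IZR (snd (cf_Bpair al k)) * (IZR (cf_a al (S k)) + / R2) + IZR (fst (cf_Bpair al k))))).
    + field. auto.
    + rewrite IH. field. auto.
Qed.

Lemma det_id al k :
  (snd (cf_Apair al k) * fst (cf_Bpair al k) - fst (cf_Apair al k) * snd (cf_Bpair al k)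
   = if Nat.even k then -1 else 1)%Z.
Proof.
  induction k as [|k IH]; [simpl; lia|].
  rewrite Bstep, Astep. simpl fst; simpl snd. rewrite Nat.even_succ, <- Nat.negb_even.
  destruct (Nat.even k); simpl; lia.
Qed.

Definition den al k := IZR (snd (cf_Bpair al k)) * cf_rem al (S k) + IZR (fst (cf_Bpair al k)).
Definition del al k := IZR (snd (cf_Bpair al k)) * al - IZR (snd (cf_Apair al k)).

Lemma den_pos al k : irrational al -> 0 < den al k.
Proof.
  intros Hal. unfold den. destruct (B_bounds al k Hal) as (H1 & H2 & _).
  apply IZR_le in H1. apply IZR_le in H2. pose proof (rem_gt1 al k Hal). nra.
Qed.

Lemma del_den al k : irrational al ->
  del al k * den al k = if Nat.even k then 1 else -1.
Proof.
  intros Hal. unfold del, den.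
  pose proof (key_id al k Hal). pose proof (det_id al k).
  transitivity (IZR (- (snd (cf_Apair al k) * fst (cf_Bpair al k) -
     fst (cf_Apair al k) * snd (cf_Bpair al k)))).
  - rewrite opp_IZR, minus_IZR, !mult_IZR.
    transitivity (IZR (snd (cf_Bpair al k)) * (al * (IZR (snd (cf_Bpair al k)) * cf_rem al (S k) + IZR (fst (cf_Bpair al k))))
       - IZR (snd (cf_Apair al k)) * (IZR (snd (cf_Bpair al k)) * cf_rem al (S k) + IZR (fst (cf_Bpair al k)))); [ring|].
    rewrite H. ring.
  - rewrite H0. destruct (Nat.even k); reflexivity.
Qed.
Lemma fin_lemma al j : irrational al ->
  fin_cf0 (map (cf_a al) (rev (seq 1 j))) = IZR (fst (cf_Bpair al j)) / IZR (snd (cf_Bpair al j)).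
Proof.
  intros Hal. induction j as [|j IH].
  - simpl. unfold Rdiv. ring.
  - rewrite seq_S, rev_app_distr. simpl rev at 1. simpl app. rewrite map_cons.
    simpl fin_cf0. rewrite IH. replace (1 + j)%nat with (S j) by lia.
    rewrite Bstep. simpl fst; simpl snd.
    destruct (B_bounds al j Hal) as (H1 & H2 & _). pose proof (a_ge1 al j Hal).
    apply IZR_le in H1. apply IZR_le in H2. apply IZR_le in H.
    rewrite plus_IZR, mult_IZR. field. split; nra.
Qed.

Lemma lambda_den al j : irrational al ->
  den al j = IZR (snd (cf_Bpair al j)) * cf_lambda al (S j).
Proof.
  intros Hal. unfold cf_lambda, den. replace (S j - 1)%nat with j by lia.
  rewrite fin_lemma by auto. destruct (B_bounds al j Hal) as (H1 & H2 & _).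
  apply IZR_le in H2. field. lra.
Qed.

Lemma same_sign a b : 0 < a * b -> Rabs a <= Rabs (a + b).
Proof.
  intros H. destruct (Rle_or_lt 0 a) as [h1|h1]; destruct (Rle_or_lt 0 b) as [h2|h2].
  - rewrite !Rabs_right; lra.
  - nra.
  - nra.
  - rewrite !Rabs_left; lra.
Qed.

Lemma best_approx al j p q : irrational al ->
  (0 < q < snd (cf_Bpair al (S j)))%Z ->
  Rabs (del al j) <= Rabs (IZR q * al - IZR p).
Proof.
  intros Hal Hq.
  pose proof (det_id al (S j)) as Hd.
  assert (F1 : fst (cf_Bpair al (S j)) = snd (cf_Bpair al j)) by (rewrite Bstep; reflexivity).
  assert (F2 : fst (cf_Apair al (S j)) = snd (cf_Apair al j)) by (rewrite Astep; reflexivity).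
  rewrite F1, F2 in Hd.
  set (b0 := snd (cf_Bpair al j)) in *. set (c0 := snd (cf_Apair al j)) in *.
  set (b1 := snd (cf_Bpair al (S j))) in *. set (c1 := snd (cf_Apair al (S j))) in *.
  set (d := if Nat.even (S j) then (-1)%Z else 1%Z) in *.
  assert (Hdd : (d * d = 1)%Z) by (unfold d; destruct (Nat.even (S j)); reflexivity).
  set (u := (d * (q * c1 - p * b1))%Z). set (v := (d * (p * b0 - q * c0))%Z).
  assert (Eq : (u * b0 + v * b1 = q)%Z).
  { transitivity (d*(q*(c1*b0-c0*b1)))%Z; [unfold u, v; ring| rewrite Hd; transitivity (q*(d*d))%Z; [ring| rewrite Hdd; ring]]. }
  assert (Ep : (u * c0 + v * c1 = p)%Z).
  { transitivity (d*(p*(c1*b0-c0*b1)))%Z; [unfold u, v; ring| rewrite Hd; transitivity (p*(d*d))%Z; [ring| rewrite Hdd; ring]]. }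
  assert (Eeps : IZR q * al - IZR p = IZR u * del al j + IZR v * del al (S j)).
  { unfold del. fold b0 c0 b1 c1. rewrite <- Eq, <- Ep. rewrite !plus_IZR, !mult_IZR. ring. }
  rewrite Eeps.
  destruct (B_bounds al j Hal) as (_ & Hb0 & _).
  fold b0 in Hb0.
  assert (Hsign : del al j * del al (S j) < 0).
  { pose proof (del_den al j Hal). pose proof (del_den al (S j) Hal).
    pose proof (den_pos al j Hal). pose proof (den_pos al (S j) Hal).
    rewrite Nat.even_succ, <- Nat.negb_even in H0.
    assert (del al j * del al (S j) * (den al j * den al (S j)) = -1).
    { transitivity ((del al j * den al j) * (del al (S j) * den al (S j))); [ring|].
      rewrite H, H0. destruct (Nat.even j); simpl; ring. }
    assert (0 < den al j * den al (S j)) by (apply Rmult_lt_0_compat; auto).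
    destruct (Rlt_or_le (del al j * del al (S j)) 0) as [h|h]; [exact h|].
    pose proof (Rmult_le_pos _ _ h (Rlt_le _ _ H4)). lra. }
  set (x := del al j) in *. set (y := del al (S j)) in *.
  assert (Hu1 : forall z, (z <> 0)%Z -> 1 <= Rabs (IZR z)).
  { intros z Hz. rewrite <- abs_IZR. apply IZR_le. lia. }
  destruct (Z.eq_dec v 0) as [Hv|Hv].
  - rewrite Hv, Rmult_0_l, Rplus_0_r, Rabs_mult.
    assert (u <> 0)%Z by (intro Hu0; rewrite Hu0, Hv in Eq; lia).
    pose proof (Hu1 u H). pose proof (Rabs_pos x).
    rewrite <- (Rmult_1_l (Rabs x)) at 1. apply Rmult_le_compat_r; auto.
  - destruct (Z.eq_dec u 0) as [Hu|Hu].
    + exfalso. rewrite Hu in Eq. simpl in Eq.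
      destruct (Z_le_gt_dec v 0) as [h|h].
      * assert (v * b1 <= 0)%Z by (apply Z.mul_nonpos_nonneg; lia). lia.
      * assert ((v - 1) * b1 >= 0)%Z by (apply Z.le_ge, Z.mul_nonneg_nonneg; lia). lia.
    + assert (Huv : (u * v < 0)%Z).
      { destruct (Z_lt_le_dec u 0) as [h1|h1]; destruct (Z_lt_le_dec v 0) as [h2|h2].
        - exfalso. assert (u * b0 < 0)%Z by (apply Z.mul_neg_pos; lia).
          assert (v * b1 < 0)%Z by (apply Z.mul_neg_pos; lia). lia.
        - apply Z.mul_neg_pos; lia.
        - apply Z.mul_pos_neg; lia.
        - exfalso. assert (u * b0 >= 0)%Z by (apply Z.le_ge, Z.mul_nonneg_nonneg; lia).
          assert ((v - 1) * b1 >= 0)%Z by (apply Z.le_ge, Z.mul_nonneg_nonneg; lia). lia. }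
      apply IZR_lt in Huv. rewrite mult_IZR in Huv.
      pose proof (Hu1 u Hu).
      assert (HXY : 0 < (IZR u * x) * (IZR v * y)).
      { replace ((IZR u * x) * (IZR v * y)) with ((IZR u * IZR v) * (x * y)) by ring.
        apply Rmult_neg_neg; auto. }
      eapply Rle_trans; [|apply same_sign; exact HXY].
      rewrite Rabs_mult. pose proof (Rabs_pos x).
      rewrite <- (Rmult_1_l (Rabs x)) at 1. apply Rmult_le_compat_r; auto.
Qed.

Lemma find_j al q : irrational al -> (1 <= q)%Z ->
  exists j, (snd (cf_Bpair al j) <= q < snd (cf_Bpair al (S j)))%Z.
Proof.
  intros Hal Hq.
  assert (forall m, (q < snd (cf_Bpair al (S m)))%Z ->
     exists j, (snd (cf_Bpair al j) <= q < snd (cf_Bpair al (S j)))%Z).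
  { induction m as [|m IH]; intros Hm.
    - exists O. simpl snd at 1. lia.
    - destruct (Z_lt_le_dec q (snd (cf_Bpair al (S m)))) as [h|h].
      + apply IH; auto.
      + exists (S m). lia. }
  apply (H (Z.to_nat q)). destruct (B_bounds al (S (Z.to_nat q)) Hal) as (_ & _ & _ & H4).
  lia.
Qed.

Lemma legendre al p q : irrational al -> (1 <= q)%Z ->
  0 < IZR p - IZR q * al < / (2 * IZR q) ->
  exists j c, Nat.even j = false /\ (1 <= c)%Z /\ q = (c * snd (cf_Bpair al j))%Z /\
    IZR p - IZR q * al = IZR c / den al j.
Proof.
  intros Hal Hq Heps.
  destruct (find_j al q Hal Hq) as [j Hj].
  pose proof (best_approx al j p q Hal ltac:(lia)) as HBA.
  set (b := snd (cf_Bpair al j)) in *. set (c := snd (cf_Apair al j)) in *.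
  set (b' := fst (cf_Bpair al j)) in *. set (c' := fst (cf_Apair al j)) in *.
  assert (Hqr : 1 <= IZR q) by (apply IZR_le; auto).
  assert (Hbr : IZR b <= IZR q) by (apply IZR_le; lia).
  destruct (B_bounds al j Hal) as (_ & Hb1 & _). fold b in Hb1.
  assert (Hb1r : 1 <= IZR b) by (apply IZR_le; auto).
  set (eps := IZR q * al - IZR p) in *.
  assert (Hae : Rabs eps = - eps) by (apply Rabs_left; unfold eps; lra).
  assert (Hpb : (p * b = q * c)%Z).
  { destruct (Z.eq_dec (p*b - q*c) 0) as [h|h]; [lia|exfalso].
    assert (E : IZR (p*b - q*c) = IZR q * del al j - IZR b * eps).
    { unfold eps, del. fold b c. rewrite minus_IZR, !mult_IZR. ring. }
    assert (1 <= Rabs (IZR (p*b - q*c))) by (rewrite <- abs_IZR; apply IZR_le; lia).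
    rewrite E in H.
    pose proof (Rabs_triang (IZR q * del al j) (- (IZR b * eps))).
    rewrite Rabs_Ropp, !Rabs_mult, Hae, (Rabs_right (IZR q)), (Rabs_right (IZR b)) in H0 by lra.
    assert (IZR q * (-eps) < / 2).
    { replace (/2) with (IZR q * / (2 * IZR q)) by (field; lra).
      apply Rmult_lt_compat_l; unfold eps; lra. }
    assert (IZR b * (-eps) < /2).
    { apply Rle_lt_trans with (IZR q * (-eps)); [|auto].
      apply Rmult_le_compat_r; unfold eps in *; lra. }
    assert (IZR q * Rabs (del al j) <= IZR q * (- eps)).
    { apply Rmult_le_compat_l; lra. }
    unfold Rminus in H. lra. }
  pose proof (det_id al j) as Hd. fold b c b' c' in Hd.
  set (d := if Nat.even j then (-1)%Z else 1%Z) in *.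
  assert (Hdd : (d * d = 1)%Z) by (unfold d; destruct (Nat.even j); reflexivity).
  set (e := (d * (p * b' - q * c'))%Z).
  assert (Hqd : (q * d = b * (p * b' - q * c'))%Z).
  { rewrite <- Hd. transitivity (q * c * b' - b * q * c')%Z; [ring|].
    rewrite <- Hpb. ring. }
  assert (Hqe : q = (e * b)%Z).
  { transitivity (q * (d * d))%Z; [rewrite Hdd; ring|].
    transitivity ((q * d) * d)%Z; [ring|]. rewrite Hqd. unfold e. ring. }
  assert (Hpe : p = (e * c)%Z).
  { apply (Z.mul_reg_r _ _ b); [lia|]. rewrite Hpb, Hqe. ring. }
  assert (He1 : (1 <= e)%Z) by nia.
  assert (Heps2 : eps = IZR e * del al j).
  { unfold eps, del. fold b c. rewrite Hqe, Hpe, !mult_IZR. ring. }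
  pose proof (del_den al j Hal) as HDD. pose proof (den_pos al j Hal) as HDP.
  assert (Hel : 1 <= IZR e) by (apply IZR_le; auto).
  assert (Hdneg : del al j < 0).
  { destruct (Rlt_or_le (del al j) 0) as [h|h]; [auto|].
    assert (0 <= IZR e * del al j) by (apply Rmult_le_pos; lra). unfold eps in *; lra. }
  exists j, e. 
  assert (Hodd : Nat.even j = false).
  { destruct (Nat.even j) eqn:Ev; [|reflexivity]. exfalso.
    assert (del al j * den al j < 0) by (apply Rmult_neg_pos; auto). lra. }
  split; [auto|]. split; [auto|]. split; [exact Hqe|].
  rewrite Hodd in HDD.
  replace (IZR p - IZR q * al) with (- eps) by (unfold eps; ring).
  rewrite Heps2. assert (del al j = -1 / den al j) by (apply Rmult_eq_reg_r with (den al j); [rewrite HDD; field; lra | lra]).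
  rewrite H. field. lra.
Qed.

Theorem mainTheorem12 (theta : R) (n : nat) :
  1 < theta -> theta < exp 3 -> irrational (ln theta) ->
  in_A theta n ->
  exists c k : nat, (1 <= c)%nat /\ (1 <= k)%nat /\
    Z.of_nat n = (Z.of_nat c * cf_B (2 / ln theta) (2 * k - 1))%Z /\
    cf_lambda (2 / ln theta) (2 * k) > 6 * (INR c) ^ 2 / ln theta.
Proof.
  intros Ht1 Ht3 Hirr HA.
  assert (HL : 0 < ln theta) by (rewrite <- ln_1; apply ln_increasing; lra).
  assert (HL3 : ln theta < 3) by (rewrite <- (ln_exp 3); apply ln_increasing; lra).
  destruct (partA theta n Ht1 HA) as [m Hm].
  destruct HA as [Hn _].
  set (L := ln theta) in *. set (al := 2 / L) in *.
  assert (Hal : irrational al).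
  { intros p q Hq E. assert (Hp : p <> 0%Z).
    { intro h; subst p. unfold Rdiv in E. rewrite Rmult_0_l in E. unfold al in E.
      assert (0 < 2 / L) by (apply Rdiv_lt_0_compat; lra). lra. }
    apply (Hirr (2*q)%Z p Hp). fold L.
    assert (IZR p <> 0) by (apply not_0_IZR; auto).
    assert (IZR q <> 0) by (apply not_0_IZR; auto).
    rewrite mult_IZR. unfold al in E.
    assert (L = 2 / (IZR p / IZR q)) by (rewrite <- E; field; lra).
    rewrite H1. field. auto. }
  assert (HnR : 1 <= INR n) by (apply (le_INR 1); lia).
  assert (HqZ : IZR (Z.of_nat n) = INR n) by (rewrite INR_IZR_INZ; reflexivity).
  assert (Heps : 0 < IZR (2*m+1) - IZR (Z.of_nat n) * al < / (2 * IZR (Z.of_nat n))).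
  { rewrite HqZ. split; [lra|]. apply Rlt_le_trans with (L / (6 * INR n)); [lra|].
    apply Rmult_le_reg_r with (6 * INR n); [lra|].
    unfold Rdiv. field_simplify; lra. }
  destruct (legendre al (2*m+1) (Z.of_nat n) Hal ltac:(lia) Heps) as (j & c & Hj & Hc & Hnq & Hval).
  assert (Hodd : exists k, j = (2 * k + 1)%nat).
  { assert (Nat.odd j = true) by (rewrite <- Nat.negb_even, Hj; reflexivity).
    apply Nat.odd_spec in H. destruct H as [k Hk]. exists k. lia. }
  destruct Hodd as [k Hk].
  exists (Z.to_nat c), (S k).
  replace (2 * S k - 1)%nat with j by lia.
  replace (2 * S k)%nat with (S j) by lia.
  split; [lia|]. split; [lia|]. split.
  - unfold cf_B. rewrite Z2Nat.id by lia. exact Hnq.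
  - rewrite INR_IZR_INZ, Z2Nat.id by lia.
    rewrite lambda_den in Hval by auto.
    destruct (B_bounds al j Hal) as (_ & Hb & _).
    set (b := snd (cf_Bpair al j)) in *.
    assert (Hbr : 1 <= IZR b) by (apply IZR_le; auto).
    assert (Hcr : 1 <= IZR c) by (apply IZR_le; auto).
    pose proof (den_pos al j Hal) as HD. rewrite lambda_den in HD by auto. fold b in HD.
    set (lam := cf_lambda al (S j)) in *.
    assert (Hlam : 0 < lam).
    { destruct (Rlt_or_le 0 lam) as [h|h]; [auto|].
      assert (IZR b * lam <= IZR b * 0) by (apply Rmult_le_compat_l; lra). lra. }
    assert (HnR2 : INR n = IZR c * IZR b) by (rewrite <- HqZ, Hnq, mult_IZR; reflexivity).
    destruct Hm as [_ Hm2]. rewrite HqZ in Hval.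
    rewrite Hval, HnR2 in Hm2.
    set (X := IZR c / (IZR b * lam)) in *. set (Y := L / (6 * (IZR c * IZR b))) in *.
    assert (E1 : IZR c = X * (IZR b * lam)) by (unfold X; field; lra).
    assert (E2 : L = Y * (6 * (IZR c * IZR b))) by (unfold Y; field; lra).
    assert (HK : 0 < 6 * IZR c * IZR b * (IZR b * lam)) by (apply Rmult_lt_0_compat; [nra|lra]).
    assert (Hkk : 6 * IZR c ^ 2 * IZR b < L * IZR b * lam).
    { pose proof (Rmult_lt_compat_r _ _ _ HK Hm2) as HH.
      replace (X * (6 * IZR c * IZR b * (IZR b * lam))) with (6 * IZR c ^ 2 * IZR b) in HH by (unfold X; field; lra).
      replace (Y * (6 * IZR c * IZR b * (IZR b * lam))) with (L * IZR b * lam) in HH by (unfold Y; field; lra).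
      exact HH. }
    unfold Rgt. apply Rmult_lt_reg_r with (L * IZR b); [nra|].
    replace (6 * IZR c ^ 2 / L * (L * IZR b)) with (6 * IZR c ^ 2 * IZR b) by (field; lra).
    lra.
Qed.
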